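(* Let $X$ be a 1-reduced simplicial set, let $Q$ be a monoidal cubical set with multiplication written $(a,b)\mapsto a\cdot b$, and let $\tau=\{\tau_n:X_n\to Q_{n-1}\}_{n\ge 1}$ be a sequence of functions of degree $-1$. Let $f:{\bf \Omega}X\to Q$ be the monoidal map determined on words by $f(\bar x_1\cdots\bar x_k)=\tau(x_1)\cdots\tau(x_k)$. Then $\tau$ is a truncating twisting function if and only if $f$ is a map of cubical sets.
   Context: A simplicial set $X=\{X_n,\partial_i,s_i\}$ is 1-reduced if $X_0=X_1=\{*\}$. A cubical set $Q=\{Q_n\}_{n\ge0}$ has face operators $d_i^\epsilon:Q_n\to Q_{n-1}$ ($\epsilon=0,1$, $1\le i\le n$) and degeneracies $\eta_i:Q_n\to Q_{n+1}$ ($1\le i\le n+1$) satisfying the standard cubical identities. The product $Q\times Q'$ of cubical sets is $\bigcup_{p+q=n}Q_p\times Q'_q$ modulo $(\eta_{p+1}(a),b)\sim(a,\eta_1(b))$ with the obvious face and degeneracy operators; a monoidal cubical set is a cubical set $Q$ with an associative cubical map $Q\times Q\to Q$ having a unit $e\in Q_0$. A truncating twisting function is a sequence $\tau_n:X_n\to Q_{n-1}$, $n\ge1$, with: $\tau(x)=e$ for $x\in X_1$; $d_i^0\tau(x)=\tau(\partial_{i+1}\cdots\partial_n x)\cdot\tau(\partial_0\cdots\partial_{i-1}x)$ and $d_i^1\tau(x)=\tau(\partial_i x)$ for $1\le i\le n-1$, $x\in X_n$; and $\eta_n\tau(x)=\tau(s_n x)$ for $x\in X_n$. The monoidal cubical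 set ${\bf\Omega}X$: let $X^c$ be the graded set of formal expressions $\eta_{i_k}\cdots\eta_{i_1}(x)$, $x\in X_n$, $i_1\le\dots\le i_k$, $1\le i_j\le n+j-1$ (of degree $n+k$), containing $X$ ($k=0$). Let $\bar x$ denote the desuspension of $x\in X^c_{>0}$ (degree lowered by one). Let ${\bf\Omega}''X$ be the free graded monoid (without unit) on the $\bar x$, $x\in X^c_{>0}$, and ${\bf\Omega}'X$ its quotient by $\overline{\eta_{p+1}(x)}\cdot\bar y\sim\bar x\cdot\overline{\eta_1(y)}$ for $x\in X_{p+1}$, $y\in X$. For $x\in X_n$ set $d_i^0(\bar x)=\overline{\partial_{i+1}\cdots\partial_n x}\cdot\overline{\partial_0\cdots\partial_{i-1}x}$ and $d_i^1(\bar x)=\overline{\partial_i x}$, $1\le i\le n-1$, and $\eta_i(\bar x)=\overline{\eta_i(x)}$ (normalized). On a word $\bar x_1\cdots\bar x_k$ with $|\bar x_j|=m_j$, $m_{(q)}=m_1+\dots+m_q$, these operators act for $m_{(q-1)}<i\le m_{(q)}$ by applying the operator with index $i-m_{(q-1)}$ to the letter $\bar x_q$; the top degeneracy $\eta_n$ of a word of degree $n-1$ applies $\eta_{m_k+1}$ to the last letter; face operators are extended to degenerate elements so that the cubical identities hold. Finally ${\bf\Omega}X$ is the quotient of ${\bf\Omega}'X$ by $e\,a\sim a\,e\sim a$ where $e=\overline{s_0( * )}$, and $\eta_n(\bar x)\sim\overline{s_n(x)}$ for $x\in X_n$, $n>0$. It is a monoidal cubical set with unit $e$. *)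

(* Defs.v *)
(* Graded-set encoding of simplicial and
   cubical sets: a single carrier type with a degree function; the n-th
   component is {x | dim x = n}.  Structure maps are total functions whose
   behaviour is only constrained in the meaningful index ranges. *)
From mathcomp Require Import all_boot.
Set Implicit Arguments. Unset Strict Implicit. Unset Printing Implicit Defensive.

Record sSet := SSet {
  ss_car :> Type;
  sdim : ss_car -> nat;
  sface : nat -> ss_car -> ss_car;
  sdeg : nat -> ss_car -> ss_car;
  sdim_face : forall x i, 0 < sdim x -> i <= sdim x -> sdim (sface i x) = (sdim x).-1;
  sdim_deg : forall x i, i <= sdim x -> sdim (sdeg i x) = (sdim x).+1;
  sface_face : forall x i j, 1 < sdim x -> i < j -> j <= sdim x ->
    sface i (sface j x) = sface j.-1 (sface i x);
  sface_deg_lt : forall x i j, j <= sdim x -> i < j ->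
    sface i (sdeg j x) = sdeg j.-1 (sface i x);
  sface_deg_eq : forall x j, j <= sdim x -> sface j (sdeg j x) = x;
  sface_deg_eq1 : forall x j, j <= sdim x -> sface j.+1 (sdeg j x) = x;
  sface_deg_gt : forall x i j, j <= sdim x -> j.+1 < i -> i <= (sdim x).+1 ->
    sface i (sdeg j x) = sdeg j (sface i.-1 x);
  sdeg_deg : forall x i j, i <= j -> j <= sdim x ->
    sdeg i (sdeg j x) = sdeg j.+1 (sdeg i x)
}.

Definition one_reduced (X : sSet) (star : X) :=
  [/\ sdim star = 0, (forall x : X, sdim x = 0 -> x = star)
    & (forall x : X, sdim x = 1 -> x = sdeg 0 star)].

(* ---------- cubical sets: faces d_i^eps (1<=i<=n, eps : bool with
   false = 0, true = 1), degeneracies eta_i (1 <= i <= n+1) ------------- *)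
Record cSet := CSet {
  cs_car :> Type;
  cdim : cs_car -> nat;
  cface : nat -> bool -> cs_car -> cs_car;
  cdeg : nat -> cs_car -> cs_car;
  cdim_face : forall a i e, 1 <= i <= cdim a -> cdim (cface i e a) = (cdim a).-1;
  cdim_deg : forall a i, 1 <= i <= (cdim a).+1 -> cdim (cdeg i a) = (cdim a).+1;
  cface_face : forall a i j e e', 1 <= i -> i < j -> j <= cdim a ->
    cface i e (cface j e' a) = cface j.-1 e' (cface i e a);
  cface_deg_lt : forall a i j e, 1 <= j -> j < i -> i <= (cdim a).+1 ->
    cface j e (cdeg i a) = cdeg i.-1 (cface j e a);
  cface_deg_eq : forall a i e, 1 <= i <= (cdim a).+1 -> cface i e (cdeg i a) = a;
  cface_deg_gt : forall a i j e, 1 <= i -> i < j -> j <= (cdim a).+1 ->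
    cface j e (cdeg i a) = cdeg i (cface j.-1 e a);
  cdeg_deg : forall a i j, 1 <= i -> i <= j -> j <= (cdim a).+1 ->
    cdeg i (cdeg j a) = cdeg j.+1 (cdeg i a)
}.

(* ---------- monoidal cubical sets: an associative unital cubical map
   Q x Q -> Q; compatibility with the faces/degeneracies of the product
   (including the identification (eta_{p+1} a, b) ~ (a, eta_1 b)). ------ *)
Record mcSet := MCSet {
  mc_cset :> cSet;
  cmul : mc_cset -> mc_cset -> mc_cset;
  cunit : mc_cset;
  cdim_unit : cdim cunit = 0;
  cdim_mul : forall a b, cdim (cmul a b) = cdim a + cdim b;
  cmulA : associative cmul;
  cmul1 : left_id cunit cmul;
  cmulr1 : right_id cunit cmul;
  cface_mul_l : forall a b i e, 1 <= i <= cdim a ->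
    cface i e (cmul a b) = cmul (cface i e a) b;
  cface_mul_r : forall a b i e, cdim a < i <= cdim a + cdim b ->
    cface i e (cmul a b) = cmul a (cface (i - cdim a) e b);
  cdeg_mul_l : forall a b i, 1 <= i <= (cdim a).+1 ->
    cdeg i (cmul a b) = cmul (cdeg i a) b;
  cdeg_mul_r : forall a b i, cdim a < i <= (cdim a + cdim b).+1 ->
    cdeg i (cmul a b) = cmul a (cdeg (i - cdim a) b)
}.

Section Omega.
Variables (X : sSet) (star : X).

(* A letter (x, J) stands for the desuspension of the formal expression
   eta_{i_k} ... eta_{i_1}(x) of X^c, where J = [:: i_k; ...; i_1] lists the
   degeneracy indices outermost first (so rev J = [:: i_1; ...; i_k]). *)
Definition letter := (X * seq nat)%type.

Definition ldeg (a : letter) : nat := (sdim a.1).-1 + size a.2.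
Definition wdeg (w : seq letter) : nat := sumn (map ldeg w).

(* x in X_n with n > 0, i_1 < ... < i_k (normal form), 1 <= i_j <= n+j-1 *)
Definition valid_letter (a : letter) : bool :=
  [&& 0 < sdim a.1, sorted ltn (rev a.2)
    & all (fun k => (0 < nth 0 (rev a.2) k) && (nth 0 (rev a.2) k <= sdim a.1 + k))
          (iota 0 (size a.2))].

Definition valid_word (w : seq letter) : bool := (0 < size w) && all valid_letter w.

(* normalization of eta_i applied on top of eta_J, using
   eta_i eta_j = eta_{j+1} eta_i for i <= j *)
Definition ins (i : nat) (J : seq nat) : seq nat :=
  map succn [seq j <- J | i <= j] ++ i :: [seq j <- J | j < i].

Definition leta (i : nat) (a : letter) : letter := (a.1, ins i a.2).

(* degeneracies on words: index i in (m_(q-1), m_(q)] acts on letter q;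
   the top degeneracy acts on the last letter *)
Fixpoint weta (i : nat) (w : seq letter) : seq letter :=
  match w with
  | [::] => [::]
  | [:: a] => [:: leta i a]
  | a :: w' => if i <= ldeg a then leta i a :: w' else a :: weta (i - ldeg a) w'
  end.

Definition iterface (l : seq nat) (x : X) : X := foldr (@sface X) x l.

(* faces of a nondegenerate letter xbar, x in X_n, 1 <= i <= n-1:
   d_i^0 xbar = (d_{i+1}...d_n x)bar . (d_0...d_{i-1} x)bar,
   d_i^1 xbar = (d_i x)bar *)
Definition base_face (i : nat) (e : bool) (x : X) : seq letter :=
  if e then [:: (sface i x, [::])]
  else [:: (iterface (iota i.+1 (sdim x - i)) x, [::]);
           (iterface (iota 0 i) x, [::])].

(* faces of degenerate letters, determined by the cubical identities *)
Fixpoint lface_rec (i : nat) (e : bool) (x : X) (J : seq nat) : seq letter :=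
  match J with
  | [::] => base_face i e x
  | j :: J' =>
      if i < j then weta j.-1 (lface_rec i e x J')
      else if i == j then [:: (x, J')]
      else weta j (lface_rec i.-1 e x J')
  end.

Definition lface (i : nat) (e : bool) (a : letter) : seq letter :=
  lface_rec i e a.1 a.2.

Fixpoint wface (i : nat) (e : bool) (w : seq letter) : seq letter :=
  match w with
  | [::] => [::]
  | a :: w' => if i <= ldeg a then lface i e a ++ w'
               else a :: wface (i - ldeg a) e w'
  end.

Definition unit_letter : letter := (sdeg 0 star, [::]).

Inductive omega_base : seq letter -> seq letter -> Prop :=
| ob_unit_l a : valid_letter a -> omega_base [:: unit_letter; a] [:: a]
| ob_unit_r a : valid_letter a -> omega_base [:: a; unit_letter] [:: a]
| ob_top (x : X) : 0 < sdim x ->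
    omega_base [:: (x, [:: sdim x])] [:: (sdeg (sdim x) x, [::])]
| ob_shift (x y : X) : 0 < sdim x -> 0 < sdim y ->
    omega_base [:: (x, [:: sdim x]); (y, [::])] [:: (x, [::]); (y, [:: 1])].

Inductive omega_eq : seq letter -> seq letter -> Prop :=
| oe_ctx u v a b : all valid_letter u -> all valid_letter v -> omega_base a b ->
    omega_eq (u ++ a ++ v) (u ++ b ++ v)
| oe_refl w : omega_eq w w
| oe_sym w1 w2 : omega_eq w1 w2 -> omega_eq w2 w1
| oe_trans w1 w2 w3 : omega_eq w1 w2 -> omega_eq w2 w3 -> omega_eq w1 w3.

End Omega.

Section Twisting.
Variables (X : sSet) (Q : mcSet) (tau : X -> Q).

Definition degree_minus_one : Prop :=
  forall x : X, 0 < sdim x -> cdim (tau x) = (sdim x).-1.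

Definition truncating_twisting : Prop :=
  [/\ (forall x : X, sdim x = 1 -> tau x = cunit Q),
      (forall (x : X) i, 1 <= i -> i < sdim x ->
         cface i false (tau x) =
           cmul (tau (iterface (iota i.+1 (sdim x - i)) x)) (tau (iterface (iota 0 i) x))
         /\ cface i true (tau x) = tau (sface i x))
    & (forall x : X, 0 < sdim x -> cdeg (sdim x) (tau x) = tau (sdeg (sdim x) x))].

Definition fl (a : @letter X) : Q := foldr (@cdeg Q) (tau a.1) a.2.

Fixpoint qprod (l : seq Q) : Q :=
  match l with
  | [::] => cunit Q
  | [:: a] => a
  | a :: l' => cmul a (qprod l')
  end.

Definition fw (w : seq (@letter X)) : Q := qprod (map fl w).

Definition omega_map_is_cubical (star : X) : Prop :=
  [/\ fw [:: unit_letter star] = cunit Q,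
      (forall w1 w2, omega_eq star w1 w2 -> fw w1 = fw w2),
      (forall w, valid_word w -> cdim (fw w) = wdeg w),
      (forall w i e, valid_word w -> 1 <= i <= wdeg w ->
         fw (wface i e w) = cface i e (fw w))
    & (forall w i, valid_word w -> 1 <= i <= (wdeg w).+1 ->
         fw (weta i w) = cdeg i (fw w))].

End Twisting.

(* Main.v *)
Require Import Defs.
From mathcomp Require Import all_boot.
From mathcomp Require Import zify.
Set Implicit Arguments. Unset Strict Implicit. Unset Printing Implicit Defensive.

Fixpoint wr (n : nat) (J : seq nat) : bool :=
  if J is j :: J' then [&& 0 < j, j <= (n + size J').+1, all (fun k => k < j) J' & wr n J']
  else true.

Definition wfl (X : sSet) (a : letter X) := (0 < sdim a.1) && wr (sdim a.1).-1 a.2.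

Lemma fw_cons (X : sSet) (Q : mcSet) (tau : X -> Q) a w :
  fw tau (a :: w) = cmul (fl tau a) (fw tau w).
Proof. by case: w => [|b w] //=; rewrite /fw /= cmulr1. Qed.

Lemma fw_cat (X : sSet) (Q : mcSet) (tau : X -> Q) u v :
  fw tau (u ++ v) = cmul (fw tau u) (fw tau v).
Proof.
elim: u => [|a u IH] /=; first by rewrite /fw /= cmul1.
by rewrite !fw_cons IH cmulA.
Qed.

Lemma cdim_fl (X : sSet) (Q : mcSet) (tau : X -> Q) a :
  degree_minus_one tau -> wfl a -> cdim (fl tau a) = ldeg a.
Proof.
move=> Ht; case: a => x J; rewrite /wfl /ldeg /fl /= => /andP[xp].
elim: J => [|j J IH] /=; first by rewrite Ht // addn0.
case/and4P => j0 jle _ wJ; have IH2 := IH wJ; rewrite cdim_deg; [lia|].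
by rewrite j0 /=; lia.
Qed.

Lemma cdim_fw (X : sSet) (Q : mcSet) (tau : X -> Q) w :
  degree_minus_one tau -> all (@wfl X) w -> cdim (fw tau w) = wdeg w.
Proof.
move=> Ht; elim: w => [|a w IH] /=; first by rewrite /fw /= cdim_unit.
case/andP => wa ww; rewrite fw_cons cdim_mul IH // cdim_fl //.
Qed.

Lemma filter_none (J : seq nat) i : all (fun k => k < i) J -> [seq k <- J | i <= k] = [::].
Proof. elim: J => [|k J IH] //= /andP[h1 h2]; rewrite IH //; case: ifP => //; lia. Qed.

Lemma ins_cons i j J : all (fun k => k < j) J ->
  ins i (j :: J) = if i <= j then j.+1 :: ins i J else i :: j :: J.
Proof.
move=> hJ; rewrite /ins /=; case: leqP => h /=.
  by [].
rewrite filter_none; last by apply: sub_all hJ => k /=; lia.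
rewrite (all_filterP _) //; by apply: sub_all hJ => k /=; lia.
Qed.

Lemma all_ins (J : seq nat) i b : all (fun k => k < b) J -> i <= b ->
  all (fun k => k < b.+1) (ins i J).
Proof.
move=> hJ hi; rewrite /ins all_cat /= all_map !all_filter.
apply/and3P; split; first (apply: sub_all hJ => k /=; lia).
  lia.
apply: sub_all hJ => k /=; lia.
Qed.

Lemma ins_wr n J i : wr n J -> 1 <= i <= (n + size J).+1 ->
  wr n (ins i J) /\ size (ins i J) = (size J).+1.
Proof.
elim: J i => [|j J IH] i /=.
  move=> _ hi; rewrite /ins /=; split=> //; apply/andP; split; lia.
case/and4P => j0 jle hJ wJ hi; rewrite ins_cons //.
case: ifP => hij /=.
  have [w1 s1] := IH i wJ ltac:(lia).
  rewrite w1 s1 all_ins //; split=> //; apply/and3P; split=> //; lia.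
split=> //; rewrite j0 jle hJ wJ /=.
have -> : all (fun k => k < i) J by apply: sub_all hJ => k /=; lia.
apply/and3P; split=> //; lia.
Qed.

Lemma fl_ins (X : sSet) (Q : mcSet) (tau : X -> Q) (x : X) J i :
  degree_minus_one tau -> 0 < sdim x -> wr (sdim x).-1 J ->
  1 <= i <= ((sdim x).-1 + size J).+1 ->
  fl tau (x, ins i J) = cdeg i (fl tau (x, J)).
Proof.
move=> Ht xp; elim: J i => [|j J IH] i //=.
case/and4P => j0 jle hJ wJ hi; rewrite ins_cons //.
case: ifP => hij //=.
rewrite /fl /= in IH *; rewrite IH //; last lia.
have hd := @cdim_fl X Q tau (x, J) Ht ltac:(by rewrite /wfl xp wJ).
rewrite /fl /ldeg /= in hd.
by rewrite [RHS]cdeg_deg //; lia.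
Qed.

Lemma leta_ok (X : sSet) (Q : mcSet) (tau : X -> Q) (a : letter X) i :
  degree_minus_one tau -> wfl a -> 1 <= i <= (ldeg a).+1 ->
  [/\ wfl (leta i a), ldeg (leta i a) = (ldeg a).+1 & fl tau (leta i a) = cdeg i (fl tau a)].
Proof.
move=> Ht; case: a => x J; rewrite /wfl /leta /ldeg /= => /andP[xp wJ] hi.
have [w1 s1] := ins_wr wJ hi.
rewrite xp w1 s1 addnS; split=> //.
by apply: fl_ins.
Qed.

Lemma weta_cons2 (X : sSet) i (a b : letter X) W :
  weta i (a :: b :: W) = if i <= ldeg a then leta i a :: b :: W else a :: weta (i - ldeg a) (b :: W).
Proof. by []. Qed.

Lemma weta_ok (X : sSet) (Q : mcSet) (tau : X -> Q) (W : seq (letter X)) i :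
  degree_minus_one tau -> 0 < size W -> all (@wfl X) W -> 1 <= i <= (wdeg W).+1 ->
  [/\ 0 < size (weta i W), all (@wfl X) (weta i W), wdeg (weta i W) = (wdeg W).+1
    & fw tau (weta i W) = cdeg i (fw tau W)].
Proof.
move=> Ht; elim: W i => [|a W IH] i // _.
case: W IH => [|b W] IH.
  rewrite /wdeg /= addn0 => /andP[wa _] hi.
  have [w1 l1 f1] := leta_ok (tau:=tau) Ht wa hi.
  by rewrite /= w1 /wdeg /= l1 addn0; split=> //; rewrite /fw /= f1.
move=> hW0 hi; have /andP[wa wW] : wfl a && all (@wfl X) (b :: W) := hW0.
have hda := cdim_fl (tau:=tau) Ht wa.
have hdW := cdim_fw (tau:=tau) Ht wW.
rewrite weta_cons2; case: ifP => h.
  have [w1 l1 f1] := leta_ok (tau:=tau) (i:=i) Ht wa ltac:(lia).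
  split=> //.
  - by apply/andP; split.
  - by rewrite /wdeg /= l1.
  - rewrite fw_cons f1 [in RHS]fw_cons cdeg_mul_l //; lia.
have [n1 w1 d1 f1] := IH (i - ldeg a) isT wW ltac:(rewrite /wdeg /= in hi *; lia).
rewrite /= wa w1; split=> //.
  rewrite /wdeg /= in d1 *; rewrite d1; lia.
rewrite fw_cons f1 [in RHS]fw_cons cdeg_mul_r ?hda //.
rewrite hdW /wdeg /= in hi *; lia.
Qed.

Lemma iterface_dim (X : sSet) k a (x : X) :
  k <= sdim x -> a + k <= (sdim x).+1 -> sdim (iterface (iota a k) x) = sdim x - k.
Proof.
elim: k a => [|k IH] a h1 h2 /=; first by rewrite subn0.
rewrite /iterface /= -/(iterface _ x) sdim_face IH //; try lia.
Qed.

Lemma lface_ok (X : sSet) (Q : mcSet) (tau : X -> Q) (x : X) J i e :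
  truncating_twisting tau -> degree_minus_one tau ->
  wfl (x, J) -> 1 <= i <= ldeg (x, J) ->
  [/\ 0 < size (lface_rec i e x J), all (@wfl X) (lface_rec i e x J),
      wdeg (lface_rec i e x J) = (ldeg (x, J)).-1
    & fw tau (lface_rec i e x J) = cface i e (fl tau (x, J))].
Proof.
move=> [T1 T2 T3] Ht.
elim: J i => [|j J IH] i.
  rewrite /wfl /ldeg /= addn0 => /andP[xp _] hi.
  have [F0 F1] := T2 x i ltac:(lia) ltac:(lia).
  case: e; rewrite /base_face.
    have hs : sdim (sface i x) = (sdim x).-1 by rewrite sdim_face //; lia.
    split=> //; try (by rewrite /= /wfl /= hs; lia); try (by rewrite /wdeg /ldeg /= hs; lia).
  have hs1 : sdim (iterface (iota i.+1 (sdim x - i)) x) = i by rewrite iterface_dim; lia.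
  have hs2 : sdim (iterface (iota 0 i) x) = sdim x - i by rewrite iterface_dim; lia.
  split=> //; try (by rewrite /= /wfl /= hs1 hs2; apply/andP; split; lia);
    try (by rewrite /wdeg /ldeg /= hs1 hs2; lia).
rewrite /wfl /ldeg /= => /andP[xp /and4P[j0 jle hJ wJ]] hi.
have wxJ : wfl (x, J) by rewrite /wfl xp.
have hd := cdim_fl (tau:=tau) Ht wxJ; rewrite /ldeg /= in hd.
rewrite [fl tau _]/fl /= -/(fl tau (x, J)) -/(@wfl X).
case: (ltnP i j) => hij.
  have [n1 w1 d1 f1] := IH i wxJ ltac:(rewrite /ldeg /=; lia).
  rewrite /ldeg /= in d1.
  have [n2 w2 d2 f2] := weta_ok (tau:=tau) (i:=j.-1) Ht n1 w1 ltac:(lia).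
  split=> //; first (rewrite d2 d1; lia).
  rewrite f2 f1 cface_deg_lt //; lia.
case: (eqVneq i j) => [hij2|hij2].
  subst i; split=> //=; first by rewrite wxJ.
    by rewrite /wdeg /ldeg /=; lia.
  by rewrite /fw /= cface_deg_eq //; lia.
have [n1 w1 d1 f1] := IH i.-1 wxJ ltac:(rewrite /ldeg /=; lia).
rewrite /ldeg /= in d1.
have [n2 w2 d2 f2] := weta_ok (tau:=tau) (i:=j) Ht n1 w1 ltac:(lia).
split=> //; first (rewrite d2 d1; lia).
rewrite f2 f1 cface_deg_gt //; lia.
Qed.

Lemma wface_ok (X : sSet) (Q : mcSet) (tau : X -> Q) w i e :
  truncating_twisting tau -> degree_minus_one tau ->
  all (@wfl X) w -> 1 <= i <= wdeg w ->
  fw tau (wface i e w) = cface i e (fw tau w).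
Proof.
move=> Tw Ht; elim: w i => [|a w IH] i /=; first by rewrite /wdeg /=; lia.
case/andP => wa ww hi.
have hda := cdim_fl (tau:=tau) Ht wa.
have hdw := cdim_fw (tau:=tau) Ht ww.
case: ifP => h.
  case: a wa hda h hi => x J wa hda h hi.
  have [_ _ _ f1] := lface_ok (i := i) e Tw Ht wa ltac:(lia).
  rewrite fw_cat /lface /= f1 fw_cons cface_mul_l //; lia.
have IH2 := IH (i - ldeg a) ww ltac:(rewrite /wdeg /= in hi *; lia).
rewrite fw_cons IH2 [in RHS]fw_cons cface_mul_r ?hda //.
rewrite hdw /wdeg /= in hi *; lia.
Qed.

Lemma valid_wfl (X : sSet) (a : letter X) : valid_letter a -> wfl a.
Proof.
case: a => x J; rewrite /valid_letter /wfl /= => /and3P[xp srt rng].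
rewrite xp /=.
have {rng} : forall k, k < size J -> 0 < nth 0 (rev J) k <= sdim x + k.
  by move=> k hk; apply: (allP rng); rewrite mem_iota.
rewrite rev_sorted in srt.
elim: J srt => [|j J IH] //= srt rng.
have tr : transitive (fun z x0 : nat => x0 < z) by move=> ? ? ? ? ?; lia.
move: srt; rewrite (path_sortedE tr) => /andP[hJ sJ].
have := rng (size J) ltac:(by []).
rewrite rev_cons nth_rcons size_rev ltnn eqxx => /andP[j0 jle].
rewrite j0 /=; apply/and3P; split=> //; first lia.
apply: IH; first exact: sJ.
move=> k hk.
have := rng k ltac:(lia).
by rewrite rev_cons nth_rcons size_rev hk.
Qed.

Theorem mainTheorem1 (X : sSet) (star : X) (Q : mcSet) (tau : X -> Q) :
  one_reduced star -> degree_minus_one tau ->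
  (truncating_twisting tau <-> omega_map_is_cubical tau star).
Proof.
move=> [s0 s0u s1u] Ht; split.
  move=> Tw; have Tw' := Tw; case: Tw' => [T1 T2 T3].
  have U : fw tau [:: unit_letter star] = cunit Q.
    by rewrite /fw /fl /= T1 // sdim_deg // s0.
  have wv : forall w, valid_word w -> 0 < size w /\ all (@wfl X) w.
    move=> w /andP[sz aw]; split; first by [].
    by apply: sub_all aw => a; apply: valid_wfl.
  have U1 : fl tau (unit_letter star) = cunit Q := U.
  split=> //.
  - move=> w1 w2; elim=> //.
    + move=> u v a b _ _ hb; rewrite !fw_cat; congr cmul; congr cmul.
      case: hb => [c _|c _|y yp|y z yp zp].
      * by rewrite fw_cons U1 cmul1.
      * by rewrite fw_cons U cmulr1.
      * by rewrite /fw /fl /= T3.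
      * rewrite /fw /fl /= -cdeg_mul_l; last by rewrite Ht //; lia.
        rewrite cdeg_mul_r ?Ht //; try lia.
        by have -> : sdim y - (sdim y).-1 = 1 by lia.
    + by move=> ? ? ? _ e1 _ e2; rewrite e1 e2.
  - by move=> w /wv [_ h]; exact: (cdim_fw (tau:=tau) Ht h).
  - by move=> w i e /wv [_ h] hi; exact: (wface_ok e Tw Ht h hi).
  - move=> w i /wv [h1 h2] hi.
    by have [_ _ _ ->] := weta_ok (tau:=tau) (i:=i) Ht h1 h2 hi.
case=> U Eq Dm Fc Dg; split.
- move=> x /s1u ->; exact: U.
- move=> x i i1 ix.
  have vw : valid_word [:: (x, [::])] by rewrite /valid_word /= /valid_letter /=; apply/andP; split=> //; lia.
  have hi : 1 <= i <= wdeg [:: (x, [::])] by rewrite /wdeg /ldeg /=; lia.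
  have le : i <= ldeg (x, [::]) by rewrite /ldeg /=; lia.
  split.
    have := Fc _ i false vw hi; rewrite /= le /= /fw /= => <-; done.
  have := Fc _ i true vw hi; rewrite /= le /= /fw /= => <-; done.
- move=> x xp.
  have := Eq _ _ (oe_ctx (u := [::]) (v := [::]) isT isT (ob_top star xp)).
  by rewrite /fw /=.
Qed.
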